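(* For every digraph $F$, $\mathrm{mad}_{\vec{\chi}}(F)\leq 4^{m-n+\mathrm{cc}(F)}(n-1)+1$, where $m=|A(F)|$, $n=|V(F)|$ and $\mathrm{cc}(F)$ is the number of connected components of the underlying graph of $F$.
   Context: $\vec{\chi}(D)$ is the dichromatic number (least $k$ such that $V(D)$ partitions into $k$ sets inducing acyclic subdigraphs). A subdivision of $F$ is obtained by replacing each arc $(x,y)$ by a directed $(x,y)$-path, internally disjoint with new internal vertices. $\mathrm{mad}_{\vec{\chi}}(F)$ is the least integer $c$ such that every digraph $D$ with $\vec{\chi}(D)\ge c$ contains a subdivision of $F$ as a subdigraph (such $c$ exists for every digraph $F$). *)

(* Defs.v *)
From mathcomp Require Import all_boot.
Set Implicit Arguments. Unset Strict Implicit. Unset Printing Implicit Defensive.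

(* Parallel arcs are
   impossible in this representation; digons (x->y and y->x) are allowed. *)
Definition digraph (V : finType) (A : rel V) : Prop := irreflexive A.

Definition induced (V : finType) (A : rel V) (S : {set V}) : rel V :=
  fun x y => [&& A x y, x \in S & y \in S].

Definition acyclic_set (V : finType) (A : rel V) (S : {set V}) : bool :=
  [forall x, forall y, induced A S x y ==> ~~ connect (induced A S) y x].

Definition dicolourable (V : finType) (A : rel V) (k : nat) : bool :=
  [exists f : {ffun V -> 'I_k}, [forall i : 'I_k, acyclic_set A [set x | f x == i]]].

(* The dichromatic number: the least k such that D is k-dicolourable.
   (For a loopless digraph such a k <= #|V| always exists; the search
   range 0..#|V| is therefore exhaustive.) *)
Definition dichromatic (V : finType) (A : rel V) : nat :=
  find (dicolourable A) (iota 0 #|V|.+1).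

(* Internal vertices of a directed path written as x :: p : all of p
   except its last vertex. *)
Definition internal (V : eqType) (p : seq V) : seq V := take (size p).-1 p.

Definition contains_subdivision (V W : finType) (A : rel V) (B : rel W) : Prop :=
  exists (phi : W -> V) (P : W -> W -> seq V),
    [/\ injective phi,
        (forall x y, B x y ->
           [/\ path A (phi x) (P x y), last (phi x) (P x y) = phi y
             & uniq (phi x :: P x y)]),
        (forall x y, B x y -> forall v, v \in internal (P x y) ->
           forall z, v != phi z)
      & (forall x1 y1 x2 y2, B x1 y1 -> B x2 y2 -> (x1, y1) != (x2, y2) ->
           forall v, v \in internal (P x1 y1) -> v \notin internal (P x2 y2))].

Definition mad_property (W : finType) (B : rel W) (c : nat) : Prop :=
  forall (V : finType) (A : rel V), digraph A -> c <= dichromatic A ->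
    contains_subdivision A B.

Definition is_mad (W : finType) (B : rel W) (c : nat) : Prop :=
  mad_property B c /\ forall c', mad_property B c' -> c <= c'.

Definition num_arcs (W : finType) (B : rel W) : nat :=
  #|[set p : W * W | B p.1 p.2]|.

Definition underlying (W : finType) (B : rel W) : rel W :=
  fun x y => B x y || B y x.

Definition num_cc (W : finType) (B : rel W) : nat :=
  n_comp (underlying B) W.

(* Main.v *)
Require Import Defs.
From mathcomp Require Import all_boot.
From mathcomp Require Import zify.
From Stdlib Require Import Classical ClassicalEpsilon.
Set Implicit Arguments. Unset Strict Implicit. Unset Printing Implicit Defensive.

Lemma choice_nat (T : Type) (P : nat -> T -> Prop) :
  (forall i, exists x, P i x) -> exists f : nat -> T, forall i, P i (f i).
Proof.
move=> H; exists (fun i => proj1_sig (constructive_indefinite_description _ (H i))).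
by move=> i; exact: (proj2_sig (constructive_indefinite_description _ (H i))).
Qed.

Section Col.
Variables (V : finType) (A : rel V).

Definition col (S : {set V}) (k : nat) : Prop :=
  exists f g : V -> nat, (forall x, x \in S -> f x < k) /\
    (forall x y, x \in S -> y \in S -> A x y -> f x = f y -> g x < g y).

Lemma col_mono S k k' : col S k -> k <= k' -> col S k'.
Proof.
move=> [f [g [H1 H2]]] kk; exists f, g; split=> // x /H1; lia.
Qed.

Lemma col_subset (S S' : {set V}) k : col S k -> S' \subset S -> col S' k.
Proof.
move=> [f [g [H1 H2]]] /subsetP sS; exists f, g; split.
  by move=> x /sS /H1.
by move=> x y /sS xS /sS yS; apply: H2.
Qed.

Lemma path_mono (e : rel V) (g : V -> nat) x p :
  (forall a b, e a b -> g a < g b) -> path e x p -> g x <= g (last x p).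
Proof.
move=> H; elim: p x => [//|y p IH x] /= /andP[exy py].
by apply: leq_trans (IH _ py); apply: ltnW; apply: H.
Qed.

Lemma connect_mono (e : rel V) (g : V -> nat) x y :
  (forall a b, e a b -> g a < g b) -> connect e x y -> g x <= g y.
Proof. move=> H /connectP[p pp ->]; exact: (path_mono H pp). Qed.

Definition rk (e : rel V) x := #|[set z | connect e z x]|.

Lemma rk_lt (e : rel V) x y : e x y -> ~~ connect e y x -> rk e x < rk e y.
Proof.
move=> exy nyx; apply: proper_card; apply/properP; split.
  apply/subsetP=> z; rewrite !inE => zx.
  by apply: connect_trans zx (connect1 exy).
by exists y; rewrite !inE ?connect0.
Qed.

Lemma acyc_rank S x y : acyclic_set A S -> induced A S x y ->
  rk (induced A S) x < rk (induced A S) y.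
Proof.
move=> /forallP/(_ x)/forallP/(_ y)/implyP H ixy.
by apply: rk_lt => //; apply: H.
Qed.

Lemma rank_acyc S (g : V -> nat) :
  (forall x y, induced A S x y -> g x < g y) -> acyclic_set A S.
Proof.
move=> H; apply/forallP=> x; apply/forallP=> y; apply/implyP=> ixy.
apply/negP=> /(connect_mono H) cyx.
by have := H _ _ ixy; rewrite ltnNge cyx.
Qed.

Lemma find_le (p : pred nat) s i : i < size s -> p (nth 0 s i) -> find p s <= i.
Proof.
move=> lt pi; rewrite leqNgt; apply/negP=> /(before_find 0).
by rewrite pi.
Qed.

Lemma col_dich k : col setT k -> dichromatic A <= k.
Proof.
move=> [f [g [H1 H2]]].
have Hf : forall x, f x < k by move=> x; apply: H1; rewrite inE.
case: (leqP k #|V|) => kV; last first.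
  by apply: leq_trans (find_size _ _) _; rewrite size_iota.
have dk : dicolourable A k.
  apply/existsP; exists [ffun x => Ordinal (Hf x)]; apply/forallP=> i.
  apply: (@rank_acyc _ g) => x y /and3P[axy]; rewrite !inE !ffunE.
  move=> /eqP fx /eqP fy; apply: H2; rewrite ?inE //.
  by rewrite -[f x]/(val (Ordinal (Hf x))) -[f y]/(val (Ordinal (Hf y))) fx fy.
rewrite /dichromatic; apply: find_le; first by rewrite size_iota.
by rewrite nth_iota.
Qed.

Lemma dich_col : digraph A -> col setT (dichromatic A).
Proof.
move=> irrA.
set s := iota 0 #|V|.+1.
case hs: (has (dicolourable A) s); last first.
  have -> : dichromatic A = #|V|.+1.
    by rewrite /dichromatic hasNfind ?hs // size_iota.
  exists (fun x => val (enum_rank x)), (fun _ => 0); split.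
    by move=> x _; apply: ltnW; apply: ltn_ord.
  move=> x y _ _ axy /val_inj/enum_rank_inj exy.
  by rewrite exy irrA in axy.
have := nth_find 0 hs; rewrite -/(dichromatic A).
have fl : dichromatic A < size s by rewrite -has_find.
rewrite nth_iota; last by rewrite size_iota in fl.
rewrite add0n => /existsP[h /forallP Hh].
pose cls (i : 'I_(dichromatic A)) := [set x | h x == i].
exists (fun x => val (h x)), (fun x => rk (induced A (cls (h x))) x); split.
  by move=> x _; apply: ltn_ord.
move=> x y _ _ axy /val_inj hxy; rewrite hxy.
apply: acyc_rank; first exact: Hh.
by rewrite /induced axy !inE hxy eqxx.
Qed.



Lemma col_split (S S1 S2 : {set V}) k :
  S \subset S1 :|: S2 ->
  (forall x y, x \in S -> y \in S -> x \notin S1 -> y \in S1 -> ~~ A x y) ->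
  col S1 k -> col S2 k -> col S k.
Proof.
move=> /subsetP sS noarc [f1 [g1 [F1 G1]]] [f2 [g2 [F2 G2]]].
pose M := (\max_(z : V) g1 z).+1.
have g1M z : g1 z < M by rewrite ltnS; apply: leq_bigmax.
exists (fun x => if x \in S1 then f1 x else f2 x),
       (fun x => if x \in S1 then g1 x else g2 x + M); split.
  move=> x xS; case: ifP => [/F1 //|x1]; apply: F2.
  by have := sS _ xS; rewrite inE x1.
move=> x y xS yS axy.
have yU := sS _ yS; have xU := sS _ xS.
case: ifP => x1; case: ifP => y1.
- by apply: G1.
- move=> _; have := g1M x; lia.
- by have := noarc _ _ xS yS; rewrite x1 y1 axy => /(_ isT isT).
- rewrite inE x1 /= in xU; rewrite inE y1 /= in yU.
  by move=> e; rewrite ltn_add2r; apply: G2.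
Qed.

Lemma col_set0 k : col set0 k.
Proof. by exists (fun _ => 0), (fun _ => 0); split=> x; rewrite inE. Qed.

Lemma sc_exists k : forall S : {set V}, ~ col S k ->
  exists x (C : {set V}), [/\ C \subset S, ~ col C k &
     forall y, y \in C -> connect A x y /\ connect A y x].
Proof.
move=> S; elim: {S}#|S| {-2}S (leqnn #|S|) => [|n IH] S.
  rewrite leqn0 => /eqP/cards0_eq -> nc; by case: nc; apply: col_set0.
move=> leS nc.
case: (set_0Vmem S) => [S0|[x xS]].
  by case: nc; rewrite S0; apply: col_set0.
pose e := induced A S.
have subc : forall a b, connect e a b -> connect A a b.
  apply: connect_sub => a b /and3P[ab _ _]; exact: connect1.
pose Out := [set y in S | connect e x y].
have xOut : x \in Out by rewrite inE xS connect0.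
have [ncD|ncO] : ~ col (S :\: Out) k \/ ~ col Out k.
  apply: NNPP => H; apply: nc; apply: (col_split (S1 := S :\: Out) (S2 := Out)).
  - by apply/subsetP=> z zS; rewrite in_setU in_setD zS andbT orNb.
  - move=> a b aS bS; rewrite in_setD aS andbT negbK => aO; rewrite in_setD => /andP[nb _].
    apply/negP=> ab; rewrite inE aS /= in aO; rewrite inE in nb.
    by move/negP: nb; apply; rewrite bS /=; apply: connect_trans aO (connect1 _); rewrite /e /induced ab aS bS.
  - by apply: NNPP => H1; apply: H; left.
  - by apply: NNPP => H1; apply: H; right.
- have lt : #|S :\: Out| <= n.
    have : #|S :\: Out| < #|S|.
      apply: proper_card; apply/properP; split; first by apply: subsetDl.
      by exists x => //; rewrite inE xOut.
    lia.
  have [y [C [sC ncC HC]]] := IH (S :\: Out) lt ncD.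
  by exists y, C; split => //; apply: subset_trans sC (subsetDl _ _).
pose In := [set y in Out | connect e y x].
have xIn : x \in In by rewrite inE xOut connect0.
have [ncD|ncI] : ~ col (Out :\: In) k \/ ~ col In k.
  apply: NNPP => H; apply: ncO; apply: (col_split (S1 := In) (S2 := Out :\: In)).
  - by apply/subsetP=> z zS; rewrite in_setU in_setD zS andbT orbN.
  - move=> a b aO bO aI bI; apply/negP=> ab; move/negP: aI; apply.
    rewrite inE aO; rewrite inE in bI; case/andP: bI => _ bx.
    have aS : a \in S by move: aO; rewrite inE => /andP[].
    have bS : b \in S by move: bO; rewrite inE => /andP[].
    by apply: connect_trans (connect1 _) bx; rewrite /e /induced ab aS bS.
  - by apply: NNPP => H1; apply: H; right.
  - by apply: NNPP => H1; apply: H; left.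
- have lt : #|Out :\: In| <= n.
    have : #|Out :\: In| < #|S|.
      apply: (@leq_trans #|Out|).
        apply: proper_card; apply/properP; split; first by apply: subsetDl.
        by exists x => //; rewrite inE xIn.
      by apply: subset_leq_card; apply/subsetP=> z; rewrite inE => /andP[].
    lia.
  have [y [C [sC ncC HC]]] := IH (Out :\: In) lt ncD.
  exists y, C; split => //; apply: subset_trans sC _.
  by apply/subsetP=> z; rewrite !inE => /andP[_ /andP[]].
exists x, In; split => //.
  by apply/subsetP=> z; rewrite !inE => /andP[/andP[]].
move=> y; rewrite !inE => /andP[/andP[_ xy] yx]; split; exact: subc.
Qed.

Lemma col_norm (S : {set V}) k : col S k -> exists f g : V -> nat,
  [/\ forall x, x \in S -> f x < k,
      forall x y, x \in S -> y \in S -> A x y -> f x = f y -> g x < g y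
    & forall x, g x <= #|V| ].
Proof.
move=> [f [g [F G]]].
pose R := fun a b => [&& a \in S, b \in S, A a b & f a == f b].
have RG : forall a b, R a b -> g a < g b.
  by move=> a b /and4P[aS bS ab /eqP fab]; apply: G.
exists f, (rk R); split => //.
  move=> x y xS yS axy fxy; apply: rk_lt; first by rewrite /R xS yS axy fxy eqxx.
  apply/negP=> /(connect_mono RG); rewrite leqNgt.
  by rewrite (G _ _ xS yS axy fxy).
by move=> x; apply: max_card.
Qed.

Lemma col_levels (S : {set V}) k (d H : V -> nat) :
  (forall x y, x \in S -> y \in S -> A x y -> odd (d x) = odd (d y) ->
      d x = d y \/ H x < H y) ->
  (forall x y, d x = d y -> H x = H y) ->
  (forall i, col [set x in S | d x == i] k) -> col S (k + k).
Proof.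
move=> HA HH Hi.
have Hi' : forall i, exists fg : (V -> nat) * (V -> nat),
  [/\ forall x, x \in [set x in S | d x == i] -> fg.1 x < k,
      forall x y, x \in [set x in S | d x == i] -> y \in [set x in S | d x == i] ->
         A x y -> fg.1 x = fg.1 y -> fg.2 x < fg.2 y
    & forall x, fg.2 x <= #|V| ].
  move=> i; have [f [g [F G B]]] := col_norm (Hi i); by exists (f, g).
have [c cP] := choice_nat Hi'.
pose N := #|V|.+1.
exists (fun x => (c (d x)).1 x + (odd (d x)) * k),
       (fun x => H x * N + (c (d x)).2 x); split.
  move=> x xS; have [F _ _] := cP (d x).
  have := F x; rewrite inE xS eqxx => /(_ isT); case: (odd (d x)) => /=; lia.
move=> x y xS yS axy.
have [Fx Gx Bx] := cP (d x); have [Fy Gy By] := cP (d y).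
have := Fx x; rewrite inE xS eqxx => /(_ isT) fx.
have := Fy y; rewrite inE yS eqxx => /(_ isT) fy.
have bx := Bx x; have bY := By y.
move=> efxy.
have po : odd (d x) = odd (d y).
  by move: efxy; case: (odd (d x)); case: (odd (d y)) => //= ; lia.
have [dxy|hxy] := HA _ _ xS yS axy po.
  rewrite (HH _ _ dxy); rewrite -dxy in efxy *.
  move/addIn: efxy => efxy.
  have := Gx x y; rewrite !inE xS yS -dxy eqxx => /(_ isT isT axy efxy); lia.
rewrite /N; nia.
Qed.

End Col.

Section Dist.
Variables (V : finType) (e : rel V) (r : V).

Definition reach n := iter n (fun X : {set V} => X :|: [set y | [exists z in X, e z y]]) [set r].

Definition dist x := find (fun n => x \in reach n) (iota 0 #|V|.+1).

Lemma reach_mono m n : m <= n -> reach m \subset reach n.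
Proof.
move=> /subnK <-; elim: (n - m) => [|k IH]; first by rewrite add0n subxx.
by apply: subset_trans IH _; rewrite addSn /=; apply: subsetUl.
Qed.

Lemma reachS n x y : x \in reach n -> e x y -> y \in reach n.+1.
Proof. by move=> xr exy; rewrite /= in_setU inE; apply/orP; right; apply/existsP; exists x; rewrite xr. Qed.

Lemma reach_le n x : x \in reach n -> dist x <= n.
Proof.
move=> xr; case: (leqP n #|V|) => nV.
  rewrite /dist leqNgt; apply/negP=> /(before_find 0).
  by rewrite nth_iota ?ltnS // add0n xr.
by apply: leq_trans (find_size _ _) _; rewrite size_iota.
Qed.

Lemma reach_connect n x : x \in reach n -> connect e r x.
Proof.
elim: n x => [|n IH] x /=; first by rewrite inE => /eqP ->; apply: connect0.
rewrite in_setU inE => /orP[/IH //|/existsP[z /andP[zr ezx]]].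
by apply: connect_trans (IH _ zr) (connect1 ezx).
Qed.

Lemma path_reach p : path e r p -> last r p \in reach (size p).
Proof.
elim/last_ind: p => [|p z IH]; first by rewrite /= inE.
rewrite rcons_path last_rcons size_rcons => /andP[/IH pr ez].
exact: reachS pr ez.
Qed.

Lemma connect_reach x : connect e r x -> x \in reach #|V|.
Proof.
move=> /connectP[p pp ->]; case: (shortenP pp) => p' pp' up' _.
have := path_reach pp'; apply/subsetP/reach_mono.
move/card_uniqP: up' => /= up'; have := max_card (mem (r :: p')); rewrite up'; exact: ltnW.
Qed.

Lemma dist_reach x : connect e r x -> x \in reach (dist x).
Proof.
move=> /connect_reach xr.
have hs : has (fun n => x \in reach n) (iota 0 #|V|.+1).
  by apply/hasP; exists #|V|; rewrite ?mem_iota ?add0n ?ltnS ?leqnn.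
have := nth_find 0 hs; rewrite -/(dist x).
have := hs; rewrite has_find size_iota -/(dist x) => lt.
by rewrite nth_iota.
Qed.

Lemma dist_le x : dist x <= #|V|.+1.
Proof. by apply: leq_trans (find_size _ _) _; rewrite size_iota. Qed.

Lemma dist_r : dist r = 0.
Proof. by apply/eqP; rewrite -leqn0; apply: reach_le; rewrite /= inE. Qed.

Lemma dist_arc x y : connect e r x -> e x y -> dist y <= (dist x).+1.
Proof. by move=> /dist_reach xr exy; apply: reach_le; apply: reachS xr exy. Qed.

Lemma dist_path x : connect e r x -> exists p, [/\ path e r p, last r p = x &
  forall v, v \in r :: p -> v = x \/ dist v < dist x].
Proof.
move: {2}(dist x) (leqnn (dist x)) => n; elim: n x => [|n IH] x.
  rewrite leqn0 => /eqP d0 /dist_reach; rewrite d0 /= inE => /eqP ->.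
  by exists [::]; split => // v; rewrite inE => /eqP ->; left.
move=> dn cx; have xr := dist_reach cx.
case: (leqP (dist x) n) => [dn'|dgt]; first exact: IH.
have dx : dist x = n.+1 by lia.
move: xr; rewrite dx /= in_setU => /orP[/reach_le|]; first by lia.
rewrite inE => /existsP[z /andP[zr ezx]].
have dz := reach_le zr.
have [p [pp lp Hp]] := IH z dz (reach_connect zr).
exists (rcons p x); split.
- by rewrite rcons_path pp lp ezx.
- by rewrite last_rcons.
- move=> v; rewrite -rcons_cons mem_rcons inE => /orP[/eqP ->|/Hp]; first by left.
  by case=> [->|]; right; lia.
Qed.

End Dist.

Lemma col_sub (V : finType) (A : rel V) (Y : {set V}) k :
  col (fun a b : {x | x \in Y} => A (val a) (val b)) setT k -> col A Y k.
Proof.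
move=> [f [g [F G]]].
exists (fun x => oapp f 0 (insub x)), (fun x => oapp g 0 (insub x)); split.
  move=> x xY; case: insubP => [x' _ _|]; last by rewrite xY.
  by apply: F; rewrite inE.
move=> x y xY yY axy; case: insubP => [x' _ ex|]; last by rewrite xY.
case: insubP => [y' _ ey|]; last by rewrite yY.
by apply: G; rewrite ?inE // ex ey.
Qed.

Lemma internal_prop (T : eqType) (a b : T) p w :
  uniq (a :: p) -> last a p = b -> w \in internal p ->
  [/\ w != a, w != b & w \in p].
Proof.
case/lastP: p => [|p z] //=; rewrite /internal size_rcons /= -cats1.
rewrite (take_size_cat _ (erefl _)) last_cat /= => /andP[aN]; rewrite cats1 rcons_uniq.
move=> /andP[zN _] <- wp; split.
- by apply/negP=> /eqP ew; move: aN; rewrite -ew mem_cat wp.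
- by apply/negP=> /eqP ew; move: zN; rewrite -ew wp.
- by rewrite mem_rcons inE wp orbT.
Qed.

Lemma last_rev_belast (T : Type) (r : T) p : last (last r p) (rev (belast r p)) = r.
Proof. by case: p => [|y p] //=; rewrite rev_cons last_rcons. Qed.

Lemma internal_map (T T' : eqType) (f : T -> T') s : internal (map f s) = map f (internal s).
Proof. by rewrite /internal map_take size_map. Qed.

Lemma contains_ext (V W : finType) (A : rel V) (B1 B2 : rel W) :
  (forall x y, B2 x y -> B1 x y) -> contains_subdivision A B1 -> contains_subdivision A B2.
Proof.
move=> H [phi [P [H1 H2 H3 H4]]]; exists phi, P; split => //.
- by move=> x y /H /H2.
- by move=> x y /H /H3.
- by move=> x1 y1 x2 y2 /H b1 /H b2; apply: H4.
Qed.

Lemma ncol_dich (V : finType) (A : rel V) k : k < dichromatic A -> ~ col A setT k.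
Proof. by move=> lt /col_dich; rewrite leqNgt lt. Qed.

Lemma dich_ge (V : finType) (A : rel V) k : digraph A -> ~ col A setT k -> k < dichromatic A.
Proof.
move=> irr nc; rewrite ltnNge; apply/negP=> le; apply: nc.
exact: col_mono (dich_col irr) le.
Qed.

Lemma ncol_levels (V : finType) (A : rel V) (S : {set V}) k (d H : V -> nat) :
  (forall x y, x \in S -> y \in S -> A x y -> odd (d x) = odd (d y) ->
      d x = d y \/ H x < H y) ->
  (forall x y, d x = d y -> H x = H y) ->
  ~ col A S (k + k) -> exists i, ~ col A [set x in S | d x == i] k.
Proof.
move=> HA HH nc; apply: NNPP => H1; apply: nc; apply: col_levels HA HH _ => i.
by apply: NNPP => H2; apply: H1; exists i.
Qed.

Section Step.
Variables (W : finType) (E' E : rel W) (u v : W) (t : nat).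
Hypothesis uv : u != v.
Hypothesis EE : forall x y, E x y = E' x y || ((x == u) && (y == v)).
Hypothesis nE : ~~ E' u v.

Lemma step : mad_property E' t.+1 -> mad_property E (4 * t).+1.
Proof.
move=> mad V A irr dch.
have nc : ~ col A setT ((t + t) + (t + t)).
  by apply: ncol_dich; apply: leq_trans dch; lia.
have [r [C [_ ncC HC]]] := sc_exists nc.
pose d1 := dist A r.
pose fA := fun a b => A b a.
pose d2 := dist fA r.
have c1 : forall y, y \in C -> connect A r y by move=> y /HC[].
have c2 : forall y, y \in C -> connect fA r y.
  by move=> y /HC[_ yr]; rewrite connect_rev.
have [i nci] : exists i, ~ col A [set x in C | d1 x == i] (t + t).
  apply: (ncol_levels (H := fun x => #|V|.+2 - d1 x)) ncC.
    move=> x y xC yC axy po.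
    have := dist_arc (c1 _ xC) axy; rewrite -/d1 => le.
    have := dist_le A r x; rewrite -/d1 => lex.
    case: (ltngtP (d1 y) (d1 x)) => [lt|gt|eq]; [right; lia| |by left].
    have ey : d1 y = (d1 x).+1 by lia.
    by move: po; rewrite ey /=; case: (odd (d1 x)).
  by move=> x y ->.
set L := [set x in C | d1 x == i] in nci.
have [j ncj] : exists j, ~ col A [set x in L | d2 x == j] t.
  apply: (ncol_levels (H := d2)) nci; last by move=> x y ->.
  move=> x y xL yL axy po.
  have yC : y \in C by move: yL; rewrite inE => /andP[].
  have := dist_arc (c2 _ yC) (axy : fA y x); rewrite -/d2 => le.
  case: (ltngtP (d2 x) (d2 y)) => [lt|gt|eq]; [by right| |by left].
  have ex : d2 x = (d2 y).+1 by lia.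
  by move: po; rewrite ex /=; case: (odd (d2 y)).
set Y := [set x in L | d2 x == j] in ncj.
have YC : forall x, x \in Y -> [/\ x \in C, d1 x = i & d2 x = j].
  by move=> x; rewrite !inE => /andP[/andP[xC /eqP ->] /eqP ->].
pose V' := {x : V | x \in Y}.
pose A' := fun a b : V' => A (val a) (val b).
have irr' : digraph A' by move=> a; rewrite /A' irr.
have [phi' [P' [inj' HP' HI' HD']]] : contains_subdivision A' E'.
  apply: mad => //; apply: dich_ge => // /col_sub; exact: ncj.
pose phi := fun z => val (phi' z).
have phiY : forall z, phi z \in Y by move=> z; exact: valP.
have Cu : phi u \in C by have [] := YC _ (phiY u).
have Cv : phi v \in C by have [] := YC _ (phiY v).
have [p [pp lp Hp]] := dist_path (c2 _ Cu).
pose q1 := rev (belast r p).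
have pq1 : path A (phi u) q1 by rewrite -lp /q1 rev_path.
have lq1 : last (phi u) q1 = r by rewrite -lp last_rev_belast.
have Hq1 : forall w, w \in q1 -> w = phi u \/ w \notin Y.
  move=> w; rewrite mem_rev => /mem_belast /Hp[->|lt]; first by left.
  have [_ _ dj] := YC _ (phiY u); move: lt; rewrite -/d2 dj => lt.
  by right; apply/negP=> /YC[_ _ dw]; lia.
have [q2 [pq2 lq2 Hq2]] := dist_path (c1 _ Cv).
have Hq2' : forall w, w \in q2 -> w = phi v \/ w \notin Y.
  move=> w wq; have wr : w \in r :: q2 by rewrite inE wq orbT.
  case/Hq2: wr => [->|lt]; first by left.
  have [_ di _] := YC _ (phiY v); move: lt; rewrite -/d1 di => lt.
  by right; apply/negP=> /YC[_ dw _]; lia.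
pose q := q1 ++ q2.
have pq : path A (phi u) q by rewrite cat_path pq1 lq1 pq2.
have lq : last (phi u) q = phi v by rewrite last_cat lq1 lq2.
have [p0 [pp0 up0 sub0 lp0]] : exists p0, [/\ path A (phi u) p0, uniq (phi u :: p0),
    {subset p0 <= q} & last (phi u) p0 = phi v].
  rewrite -lq; case: (shortenP pq) => p0 pp0 up0 sub0; by exists p0.
have Hint : forall w, w \in internal p0 -> w \notin Y.
  move=> w /(internal_prop up0 lp0) [nu nv /sub0].
  rewrite mem_cat => /orP[/Hq1|/Hq2'] [ew|//].
  - by rewrite ew eqxx in nu.
  - by rewrite ew eqxx in nv.
pose P := fun z1 z2 => if (z1 == u) && (z2 == v) then p0 else map val (P' z1 z2).
have oldE : forall z1 z2, E z1 z2 -> ~~ ((z1 == u) && (z2 == v)) -> E' z1 z2.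
  by move=> z1 z2; rewrite EE => /orP[//|->].
have intY : forall z1 z2 w, E' z1 z2 -> w \in internal (map val (P' z1 z2)) -> w \in Y.
  by move=> z1 z2 w _; rewrite internal_map => /mapP[w' _ ->]; exact: valP.
exists phi, P; split.
- by move=> a b /val_inj /inj'.
- move=> z1 z2 ez; rewrite /P; case: ifP => [/andP[/eqP -> /eqP ->]|nn].
    by split.
  have [h1 h2 h3] := HP' _ _ (oldE _ _ ez (negbT nn)).
  split.
  + by rewrite /phi path_map.
  + by rewrite /phi last_map h2.
  + by rewrite /phi -(map_cons val) map_inj_uniq //; exact: val_inj.
- move=> z1 z2 ez w; rewrite /P; case: ifP => [_|nn].
    move=> /Hint wY z; apply/negP=> /eqP ew; by move: wY; rewrite ew phiY.
  rewrite internal_map => /mapP[w' w'i ->] z.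
  rewrite /phi (inj_eq val_inj).
  exact: (HI' _ _ (oldE _ _ ez (negbT nn)) _ w'i).
- move=> x1 y1 x2 y2 e1 e2 ne w; rewrite /P.
  case: ifP => [/andP[/eqP ex1 /eqP ey1]|n1]; case: ifP => [/andP[/eqP ex2 /eqP ey2]|n2].
  + by move: ne; rewrite ex1 ey1 ex2 ey2 eqxx.
  + move=> /Hint wY; apply/negP=> /(intY _ _ _ (oldE _ _ e2 (negbT n2))).
    by rewrite (negbTE wY).
  + move=> /(intY _ _ _ (oldE _ _ e1 (negbT n1))) wY; apply/negP=> /Hint.
    by rewrite wY.
  + rewrite !internal_map => /mapP[w' w'i ->]; rewrite mem_map; last exact: val_inj.
    exact: (HD' _ _ _ _ (oldE _ _ e1 (negbT n1)) (oldE _ _ e2 (negbT n2)) ne).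
Qed.

End Step.

Lemma exists_notin (s : seq nat) k : size s < k -> exists2 c, c < k & c \notin s.
Proof.
move=> lt; apply: NNPP => H; move: lt; rewrite ltnNge => /negP; apply.
have -> : k = size (iota 0 k) by rewrite size_iota.
apply: uniq_leq_size; first exact: iota_uniq.
move=> c; rewrite mem_iota add0n /= => ck; apply: NNPP => cn; apply: H; exists c => //.
by apply/negP.
Qed.

Section Min.
Variables (V : finType) (A : rel V).
Hypothesis irr : digraph A.

Lemma ext_out (U : {set V}) v k : v \in U -> #|[set w in U | A v w]| < k ->
  col A (U :\ v) k -> col A U k.
Proof.
move=> vU lt [f [g [F G]]].
have [c ck cn] : exists2 c, c < k & c \notin [seq f w | w <- enum [set w in U | A v w]].
  by apply: exists_notin; rewrite size_map -cardE.
pose M := (\max_(z : V) g z).+1.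
have gM z : g z < M by rewrite ltnS; apply: leq_bigmax.
exists (fun x => if x == v then c else f x), (fun x => if x == v then M else g x); split.
  by move=> x xU; case: eqP => [//|/eqP xv]; apply: F; rewrite !inE xv.
move=> x y xU yU axy.
case: (eqVneq x v) => [exv|xv]; case: (eqVneq y v) => [eyv|yv].
- by rewrite exv eyv irr in axy.
- move=> e; case/negP: cn; rewrite e; apply: map_f; rewrite mem_enum inE yU.
  by rewrite -exv.
- by move=> _; apply: gM.
- by apply: G => //; rewrite ?inE ?xv ?yv ?xU ?yU.
Qed.

Lemma ext_in (U : {set V}) v k : v \in U -> #|[set w in U | A w v]| < k ->
  col A (U :\ v) k -> col A U k.
Proof.
move=> vU lt [f [g [F G]]].
have [c ck cn] : exists2 c, c < k & c \notin [seq f w | w <- enum [set w in U | A w v]].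
  by apply: exists_notin; rewrite size_map -cardE.
exists (fun x => if x == v then c else f x), (fun x => if x == v then 0 else (g x).+1); split.
  by move=> x xU; case: eqP => [//|/eqP xv]; apply: F; rewrite !inE xv.
move=> x y xU yU axy.
case: (eqVneq x v) => [exv|xv]; case: (eqVneq y v) => [eyv|yv].
- by rewrite exv eyv irr in axy.
- by [].
- move=> e; case/negP: cn; rewrite -e; apply: map_f; rewrite mem_enum inE xU.
  by rewrite -eyv.
- by move=> e; rewrite ltnS; apply: G => //; rewrite ?inE ?xv ?yv ?xU ?yU.
Qed.

Lemma min_sub k : forall U : {set V}, ~ col A U k -> exists U' : {set V},
  [/\ U' \subset U, ~ col A U' k &
      forall v, v \in U' -> k <= #|[set w in U' | A v w]| /\ k <= #|[set w in U' | A w v]|].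
Proof.
move=> U; elim: {U}#|U| {-2}U (leqnn #|U|) => [|n IH] U.
  rewrite leqn0 => /eqP/cards0_eq -> nc; by case: nc; apply: col_set0.
move=> leU nc.
case: (pickP [pred v in U | (#|[set w in U | A v w]| < k) || (#|[set w in U | A w v]| < k)]) => [v|none].
  rewrite /= => /andP[vU bad].
  have nc' : ~ col A (U :\ v) k.
    move=> cl; apply: nc; case/orP: bad => lt; [exact: ext_out lt cl|exact: ext_in lt cl].
  have lt' : #|U :\ v| <= n by have := cardsD1 v U; rewrite vU; lia.
  have [U' [sU' ncU' HU']] := IH _ lt' nc'.
  by exists U'; split => //; apply: subset_trans sU' (subsetDl _ _).
exists U; split => // v vU; have := none v; rewrite /= vU /= => /norP[].
by rewrite -!leqNgt.
Qed.

Lemma min_card (U : {set V}) k v : v \in U -> k <= #|[set w in U | A v w]| -> k < #|U|.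
Proof.
move=> vU le; have : [set w in U | A v w] \subset U :\ v.
  by apply/subsetP=> w; rewrite !inE => /andP[wU avw]; rewrite wU andbT; apply/eqP=> ew; rewrite ew irr in avw.
move/subset_leq_card; have := cardsD1 v U; rewrite vU; lia.
Qed.

End Min.

Section Forest.
Variable W : finType.

Definition entry := (W * option (W * bool))%type.

Definition arc_of (e : entry) : option (W * W) :=
  match e.2 with
  | Some (p, true) => Some (p, e.1)
  | Some (p, false) => Some (e.1, p)
  | None => None
  end.

Definition Frel (s : seq entry) : rel W :=
  fun x y => has (fun e => arc_of e == Some (x, y)) s.

Fixpoint goodl (s : seq entry) : bool :=
  if s is e :: s' then
    [&& e.1 \notin map fst s',
        (if e.2 is Some (p, _) then p \in map fst s' else true) & goodl s']
  else true.

Lemma goodl_uniq s : goodl s -> uniq (map fst s).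
Proof. by elim: s => //= e s IH /and3P[-> _ /IH]. Qed.

Lemma Frel_mem s x y : goodl s -> Frel s x y ->
  [/\ x \in map fst s, y \in map fst s & x != y].
Proof.
elim: s => //= e s IH /and3P[en pe gs]; rewrite /Frel /= => /orP[|/IH[] //].
  rewrite /arc_of; case: e en pe => w [[p [|]]|] //= en pe /eqP [<- <-];
    rewrite !inE eqxx pe ?orbT; split => //; apply/eqP => epw;
    by move: en; rewrite ?epw ?pe // -epw pe.
- by move=> xs ys nxy; rewrite !inE xs ys !orbT.
Qed.

Section Embed.
Variables (V : finType) (A : rel V) (U : {set V}) (n : nat) (v0 : V).
Hypothesis irr : digraph A.
Hypothesis Un : n <= #|U|.
Hypothesis Udeg : forall v, v \in U ->
  n.-1 <= #|[set w in U | A v w]| /\ n.-1 <= #|[set w in U | A w v]|.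

Lemma nbr_avail (N Used : {set V}) x k : n.-1 <= #|N| ->
  x \in Used -> x \notin N -> #|Used| <= k -> k < n ->
  exists2 y, y \in N & y \notin Used.
Proof.
move=> le xU xN cu kn; apply/subsetPn/negP => sub.
have : N \subset Used :\ x.
  apply/subsetP=> z zN; rewrite !inE (subsetP sub _ zN) andbT.
  by apply/eqP=> ezx; rewrite -ezx zN in xN.
move/subset_leq_card; have := cardsD1 x Used; rewrite xU; lia.
Qed.

Lemma embed s : goodl s -> size s <= n -> exists phi : W -> V,
  [/\ {in map fst s &, injective phi}, {in map fst s, forall z, phi z \in U}
    & forall x y, Frel s x y -> A (phi x) (phi y)].
Proof.
elim: s => [|e s IH] /=.
  by move=> _ _; exists (fun _ => v0); split => // x y; rewrite /Frel.
move=> /and3P[en pe gs] sz.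
have [phi' [inj' inU' arc']] := IH gs (ltnW sz).
pose Used := [set phi' z | z in map fst s].
have cU : #|Used| <= size s.
  apply: leq_trans (leq_imset_card _ _) _; apply: leq_trans (card_size _) _.
  by rewrite size_map.
have [x [xU xn xarc]] : exists x, [/\ x \in U, x \notin Used &
    match e.2 with
    | Some (p, true) => A (phi' p) x
    | Some (p, false) => A x (phi' p)
    | None => true end].
  move: pe; case: e.2 => [[p b] ps|_].
    have pU := inU' _ ps.
    have pUsed : phi' p \in Used by apply: imset_f.
    have [d1 d2] := Udeg pU.
    case: b.
      have [y] : exists2 y, y \in [set w in U | A (phi' p) w] & y \notin Used.
        by apply: (nbr_avail d1 pUsed _ cU sz); rewrite inE irr andbF.
      by rewrite inE => /andP[yU ay] yn; exists y.
    have [y] : exists2 y, y \in [set w in U | A w (phi' p)] & y \notin Used.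
      by apply: (nbr_avail d2 pUsed _ cU sz); rewrite inE irr andbF.
    by rewrite inE => /andP[yU ay] yn; exists y.
  have [y yU yn] : exists2 y, y \in U & y \notin Used.
    apply/subsetPn/negP => /subset_leq_card; lia.
  by exists y.
pose phi := fun z => if z == e.1 then x else phi' z.
have phiE : {in map fst s, phi =1 phi'}.
  by move=> z zs; rewrite /phi; case: eqP => // ez; rewrite -ez zs in en.
have phin : forall z, z \in map fst s -> phi' z != x.
  by move=> z zs; apply/eqP=> ez; rewrite -ez imset_f in xn.
exists phi; split.
- move=> a b; rewrite !inE => /orP[/eqP ->|za] /orP[/eqP ->|zb] //.
  + by rewrite {1}/phi eqxx (phiE _ zb) => ex; move: (phin _ zb); rewrite ex eqxx.
  + by rewrite {2}/phi eqxx (phiE _ za) => ex; move: (phin _ za); rewrite ex eqxx.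
  + by rewrite (phiE _ za) (phiE _ zb); apply: inj'.
- move=> z; rewrite inE => /orP[/eqP ->|zs]; first by rewrite /phi eqxx.
  by rewrite (phiE _ zs); apply: inU'.
- move=> a b; rewrite /Frel /= => /orP[|ab].
    move: pe xarc; rewrite /arc_of; case: e.2 => [[p [|]]|] //= pe xarc /eqP [<- <-].
      by rewrite (phiE _ pe) /phi eqxx.
    by rewrite (phiE _ pe) /phi eqxx.
  have [za zb _] := Frel_mem gs ab.
  by rewrite (phiE _ za) (phiE _ zb); apply: arc'.
Qed.

End Embed.
End Forest.

Lemma min_exists (P : nat -> Prop) n : P n ->
  exists m, [/\ P m, m <= n & forall k, P k -> m <= k].
Proof.
elim: n {-2}n (leqnn n) => [|N IH] n le Pn.
  exists n; split => // k _; lia.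
case: (classic (exists k, k < n /\ P k)) => [[k [kn Pk]]|none].
  have [m [Pm mk Hm]] := IH k ltac:(lia) Pk; exists m; split => //; lia.
exists n; split => // k Pk; rewrite leqNgt; apply/negP=> kn; apply: none; by exists k.
Qed.

Lemma closure_connect (T : finType) (e : rel T) (S : pred T) x y :
  (forall a b, S a -> e a b -> S b) -> S x -> connect e x y -> S y.
Proof.
move=> H Sx /connectP[p pp ->]; elim: p x Sx pp => //= z p IH x Sx /andP[exz pz].
by apply: IH pz; apply: H exz.
Qed.

Section Build.
Variables (W : finType) (B : rel W).

Lemma underlying_sym : symmetric (underlying B).
Proof. by move=> x y; rewrite /underlying orbC. Qed.

Lemma build k : k <= #|W| -> exists (s : seq (entry W)) (Rt : seq W), [/\ goodl s, size s = k,
  (forall x y, Frel s x y -> B x y),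
  #|[set p : W * W | Frel s p.1 p.2]| + size Rt = k &
  [/\ uniq Rt, {subset Rt <= map fst s} &
  (forall a b, a \in Rt -> b \in Rt -> a != b -> ~~ connect (underlying B) a b)]].
Proof.
elim: k => [|k IH] kn.
  exists [::], [::]; split; [by []|by []|by []| |by split].
  rewrite addn0; have -> : [set p : W * W | Frel [::] p.1 p.2] = set0 by apply/setP=> p; rewrite !inE.
  by rewrite cards0.
have [s [Rt [gs ss sB cnt [uR sR pR]]]] := IH (ltnW kn).
case: (pickP [pred wz : W * W | (wz.1 \notin map fst s) && (wz.2 \in map fst s) &&
                               underlying B wz.2 wz.1]) => [[w z]|none].
  rewrite /= => /andP[/andP[wn zs] uzw].
  pose e : entry W := (w, Some (z, B z w)).
  pose a := if B z w then (z, w) else (w, z).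
  have Fe : forall x y, Frel (e :: s) x y = ((x, y) == a) || Frel s x y.
    by move=> x y; rewrite /Frel /= /arc_of /= /a; case: (B z w); congr (_ || _); apply/eqP/eqP => [[-> ->]|[-> ->]].
  have aB : B a.1 a.2.
    by rewrite /a; case: ifP => // bzw; move: uzw; rewrite /underlying bzw.
  have an : a \notin [set p : W * W | Frel s p.1 p.2].
    rewrite inE; apply/negP=> /(Frel_mem gs) [h1 h2 _]; move: h1 h2.
    by rewrite /a; case: (B z w) => /=; rewrite (negbTE wn) // => _.
  exists (e :: s), Rt; split.
  - by rewrite /= wn zs gs.
  - by rewrite /= ss.
  - move=> x y; rewrite Fe => /orP[/eqP exy|/sB //]; have -> : x = a.1 by rewrite -exy.
    by have -> : y = a.2 by rewrite -exy.
  - have -> : [set p : W * W | Frel (e :: s) p.1 p.2] = a |: [set p : W * W | Frel s p.1 p.2].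
      by apply/setP=> [[x y]]; rewrite !inE Fe.
    by rewrite cardsU1 an /= -addnA cnt add1n.
  split.
  - exact: uR.
  - by move=> x /sR xs; rewrite /= inE xs orbT.
  - exact: pR.
have [w wn] : exists w, w \notin map fst s.
  apply: NNPP => H; move: kn; rewrite ltnNge => /negP; apply.
  have -> : #|W| = size (enum W) by rewrite cardE.
  rewrite -ss -(size_map fst); apply: uniq_leq_size; first exact: enum_uniq.
  move=> x _; apply: NNPP => xn; apply: H; exists x; exact/negP.
have clos : forall x y, x \in map fst s -> connect (underlying B) x y -> y \in map fst s.
  move=> x y xs; apply: (closure_connect (S := fun z => z \in map fst s)) => // a b sa ab.
  apply: NNPP => bn; have := none (b, a); rewrite /= sa ab andbT => h.
  by apply: bn; move/negbT: h; case: (b \in _).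
pose e : entry W := (w, None).
have Fe : forall x y, Frel (e :: s) x y = Frel s x y by [].
exists (e :: s), (w :: Rt); split.
- by rewrite /= wn gs.
- by rewrite /= ss.
- by move=> x y; rewrite Fe; apply: sB.
- have -> : [set p : W * W | Frel (e :: s) p.1 p.2] = [set p : W * W | Frel s p.1 p.2] by [].
  by rewrite /= addnS cnt.
split.
- rewrite /= uR andbT; apply/negP=> /sR; exact/negP.
- by move=> x; rewrite !inE => /orP[/eqP ->|/sR xs]; rewrite ?eqxx // xs orbT.
- have csym := sym_connect_sym underlying_sym.
  have nw : forall x, x \in Rt -> ~~ connect (underlying B) x w.
    by move=> x /sR xs; apply/negP=> /(clos _ _ xs); exact/negP.
  move=> x y; rewrite !inE => /orP[/eqP ->|xR] /orP[/eqP ->|yR].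
  + by rewrite eqxx.
  + by move=> _; rewrite csym; apply: nw.
  + by move=> _; apply: nw.
  + exact: pR.
Qed.

Lemma roots_count (Rt : seq W) : uniq Rt ->
  (forall a b, a \in Rt -> b \in Rt -> a != b -> ~~ connect (underlying B) a b) ->
  size Rt <= num_cc B.
Proof.
move=> uR pR; have csym := sym_connect_sym underlying_sym.
have ur : uniq (map (root (underlying B)) Rt).
  rewrite map_inj_in_uniq // => a b aR bR /(rootP csym) cab.
  by apply: NNPP => /eqP nab; move: (pR _ _ aR bR nab); rewrite cab.
rewrite -(size_map (root (underlying B))) -(card_uniqP ur) /num_cc.
apply: subset_leq_card; apply/subsetP=> x /mapP[a _ ->].
by rewrite !inE roots_root.
Qed.

End Build.

Lemma mad_ext (W : finType) (B1 B2 : rel W) c :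
  (forall x y, B2 x y -> B1 x y) -> mad_property B1 c -> mad_property B2 c.
Proof. by move=> H M V A irr le; apply: contains_ext H (M V A irr le). Qed.

Section Final.
Variables (W : finType) (B : rel W).
Hypothesis irrB : digraph B.

Lemma base (s : seq (entry W)) : goodl s -> size s = #|W| ->
  mad_property (Frel s) (#|W|.-1).+1.
Proof.
move=> gs ss V A irr dch.
have all_in : forall w, w \in map fst s.
  move=> w; apply: NNPP => /negP wn.
  have u : uniq (w :: map fst s) by rewrite /= wn goodl_uniq.
  have := max_card (mem (w :: map fst s)); move/card_uniqP: u => ->; rewrite /= size_map ss.
  by rewrite ltnn.
have nc : ~ col A setT #|W|.-1 by apply: ncol_dich.
have [U [_ ncU HU]] := min_sub irr nc.
have [U0|[v0 v0U]] := set_0Vmem U; first by case: ncU; rewrite U0; apply: col_set0.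
have Un : #|W| <= #|U|.
  have [h1 _] := HU _ v0U; have := min_card irr v0U h1; lia.
have [phi [inj inU arc]] := embed v0 irr Un HU gs (eq_leq ss).
exists phi, (fun x y => [:: phi y]); split.
- by move=> a b; apply: inj; apply: all_in.
- move=> x y fxy; have [_ _ nxy] := Frel_mem gs fxy; rewrite /= arc // !andbT; split => //.
  rewrite inE; apply/negP=> /eqP; move/inj; rewrite !all_in => /(_ isT isT) exy.
  by rewrite exy eqxx in nxy.
- by [].
- by [].
Qed.

Lemma extra (s : seq (entry W)) : goodl s -> size s = #|W| ->
  forall R : {set W * W}, (forall p, p \in R -> B p.1 p.2) ->
  (forall p, p \in R -> ~~ Frel s p.1 p.2) ->
  mad_property (fun x y => Frel s x y || ((x, y) \in R)) (4 ^ #|R| * #|W|.-1).+1.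
Proof.
move=> gs ss R; move Rj : #|R| => j; elim: j R Rj => [|j IH] R Rj RB RF.
  move/eqP: Rj; rewrite cards_eq0 => /eqP ->; rewrite expn0 mul1n.
  by apply: mad_ext (base gs ss) => x y; rewrite inE orbF.
have [R0|[[a1 a2] aR]] := set_0Vmem R; first by rewrite R0 cards0 in Rj.
have cR : #|R :\ (a1, a2)| = j by have := cardsD1 (a1, a2) R; rewrite aR Rj /= add1n => -[].
have IH' := IH (R :\ (a1, a2)) cR (fun p pR => RB p (subsetP (subsetDl _ _) _ pR))
  (fun p pR => RF p (subsetP (subsetDl _ _) _ pR)).
have := step (u := a1) (v := a2) (t := 4 ^ j * #|W|.-1) _ _ _ IH'.
rewrite expnS -mulnA; apply.
- apply/negP=> /eqP e; have := RB _ aR; rewrite /= e irrB //.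
- move=> x y; rewrite in_setD1 xpair_eqE; case: (x =P a1) => [->|_]; case: (y =P a2) => [->|_]; by rewrite ?aR /= ?orbT ?orbF ?andbT.
- by rewrite !inE eqxx /= orbF; apply: RF aR.
Qed.

End Final.

Theorem corollary36 (W : finType) (B : rel W) :
  digraph B ->
  exists c : nat, is_mad B c /\
    c <= 4 ^ (num_arcs B + num_cc B - #|W|) * (#|W| - 1) + 1.
Proof.
move=> irrB.
have [s [Rt [gs ss sB cnt [uR sR pR]]]] := build B (leqnn #|W|).
pose F0 := [set p : W * W | Frel s p.1 p.2].
pose arcs := [set p : W * W | B p.1 p.2].
pose R := arcs :\: F0.
have RB : forall p, p \in R -> B p.1 p.2 by move=> p; rewrite !inE => /andP[_ ->].
have RF : forall p, p \in R -> ~~ Frel s p.1 p.2 by move=> p; rewrite !inE => /andP[-> _].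
have M := extra irrB gs ss RB RF.
have M' : mad_property B (4 ^ #|R| * #|W|.-1).+1.
  apply: mad_ext M => x y bxy; case fxy: (Frel s x y) => //=.
  by rewrite !inE fxy bxy.
have F0a : F0 \subset arcs by apply/subsetP=> p; rewrite !inE => /sB.
have cRa : #|R| = num_arcs B - #|F0|.
  by rewrite /R cardsD (setIidPr F0a).
have cc := roots_count uR pR.
have F0m : #|F0| <= num_arcs B by apply: subset_leq_card.
have Rle : #|R| <= num_arcs B + num_cc B - #|W|.
  rewrite cRa; move: cnt; rewrite -/F0; lia.
have [c [Pc cle _]] := min_exists M'.
have [m [Pm mc Hm]] := min_exists Pc.
exists m; split; first by split.
apply: leq_trans mc _; apply: leq_trans cle _.
rewrite addn1 ltnS subn1 leq_mul2r; apply/orP; right.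
by apply: leq_pexp2l.
Qed.
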